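(* A (connected) set Hopf monoid $(\mathbf{H},m,\Delta)$ is self-adjoint with respect to some poset structure if and only if it is commutative and cocommutative.
   Context: A (connected) set species $\mathbf{H}$ assigns to each finite set $I$ a finite set $\mathbf{H}[I]$, $\mathbf{H}[\emptyset]=\{1\}$, and to each bijection a bijection, functorially. A set Hopf monoid has maps $m_{S,T}:\mathbf{H}[S]\times\mathbf{H}[T]\to\mathbf{H}[S\sqcup T]$ (natural, associative, unital) and $\Delta_{S,T}:\mathbf{H}[S\sqcup T]\to\mathbf{H}[S]\times\mathbf{H}[T]$ (natural, coassociative, counital), satisfying compatibility: for $I=S_1\sqcup S_2=T_1\sqcup T_2$, $A=S_1\cap T_1$, $B=S_1\cap T_2$, $C=S_2\cap T_1$, $D=S_2\cap T_2$, if $\Delta_{A,B}(x)=(x_A,x_B)$, $\Delta_{C,D}(y)=(y_C,y_D)$ then $\Delta_{T_1,T_2}(m_{S_1,S_2}(x,y))=(m_{A,C}(x_A,y_C),m_{B,D}(x_B,y_D))$. Commutative: $m_{S,T}(x,y)=m_{T,S}(y,x)$; cocommutative: $\Delta_{S,T}(x)=(y,z)\iff\Delta_{T,S}(x)=(z,y)$. ''Self-adjoint with respect to some poset structure'' means there exist partial orders on the sets $\mathbf{H}[I]$ such that all relabelling bijections, all $m_{S,T}$ and all $\Delta_{S,T}$ are order-preserving (product orders on products), and for all $S,T$ the maps $m_{S,T}$ and $\Delta_{S,T}$ form a Galois connection (either $\Delta_{S,T}(x)\le(y,z)\iff x\le m_{S,T}(y,z)$ for all $x,y,z$, or $m_{S,T}(y,z)\le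 x\iff(y,z)\le\Delta_{S,T}(x)$ for all $x,y,z$). *)

(* Defs.v *)
From HB Require Import structures.
From mathcomp Require Import all_boot.
From mathcomp Require Import finmap.
Set Implicit Arguments. Unset Strict Implicit. Unset Printing Implicit Defensive.
Local Open Scope fset_scope.

(* Labels are natural numbers; the finite sets I
   are the finite subsets {fset nat}.  A set species H is presented in
   "fibered" form: a carrier X (the disjoint union of all H[I]) with a
   support map supp : X -> {fset nat}, so that H[I] = {x | supp x = I}.
   A bijection I -> J is a map s : nat -> nat injective on I with image J;
   relab s x is H[s](x).  mul x y is m_{supp x, supp y}(x,y) and
   comul S T x is Delta_{S,T}(x); values outside the intended domains are
   junk and never constrained. *)

Definition disj (S T : {fset nat}) : bool := S `&` T == fset0.

Definition img (s : nat -> nat) (I : {fset nat}) : {fset nat} :=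
  [fset s i | i in I].

Section Hopf.
Variables (X : Type) (supp : X -> {fset nat}) (one : X)
  (mul : X -> X -> X) (comul : {fset nat} -> {fset nat} -> X -> X * X)
  (relab : (nat -> nat) -> X -> X).

Definition is_connected_set_species : Prop :=
  ((forall I : {fset nat}, exists (n : nat) (f : 'I_n -> X),
        forall x, supp x = I -> exists i, f i = x) /\
   (supp one = fset0) /\
   ((forall x, supp x = fset0 -> x = one)) /\
   ((forall s x, {in supp x &, injective s} ->
         supp (relab s x) = img s (supp x))) /\
   ((forall s t x, {in supp x, s =1 t} -> relab s x = relab t x)) /\
   ((forall x, relab (fun i => i) x = x)) /\
   ((forall s t x, {in supp x &, injective s} ->
         {in img s (supp x) &, injective t} ->
         relab t (relab s x) = relab (t \o s) x))).

Definition is_set_monoid : Prop :=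
  (((forall x y, disj (supp x) (supp y) ->
         supp (mul x y) = supp x `|` supp y)) /\
   ((forall s x y, disj (supp x) (supp y) ->
         {in supp x `|` supp y &, injective s} ->
         relab s (mul x y) = mul (relab s x) (relab s y))) /\
   ((forall x y z, disj (supp x) (supp y) -> disj (supp x) (supp z) ->
         disj (supp y) (supp z) ->
         mul (mul x y) z = mul x (mul y z))) /\
   ((forall x, mul one x = x /\ mul x one = x))).

Definition is_set_comonoid : Prop :=
  (((forall S T x, disj S T -> supp x = S `|` T ->
         supp (comul S T x).1 = S /\ supp (comul S T x).2 = T)) /\
   ((forall s S T x, disj S T -> supp x = S `|` T ->
         {in S `|` T &, injective s} ->
         comul (img s S) (img s T) (relab s x)
           = (relab s (comul S T x).1, relab s (comul S T x).2))) /\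
   ((forall S T U x, disj S T -> disj S U -> disj T U ->
         supp x = S `|` T `|` U ->
         let: (x1, x23) := comul S (T `|` U) x in
         let: (x12, x3) := comul (S `|` T) U x in
         [/\ (comul S T x12).1 = x1, (comul S T x12).2 = (comul T U x23).1
           & x3 = (comul T U x23).2])) /\
   ((forall x, (comul fset0 (supp x) x).2 = x /\
                 (comul (supp x) fset0 x).1 = x))).

Definition hopf_compatible : Prop :=
  forall (S1 S2 T1 T2 : {fset nat}) x y,
    disj S1 S2 -> disj T1 T2 -> S1 `|` S2 = T1 `|` T2 ->
    supp x = S1 -> supp y = S2 ->
    let A := S1 `&` T1 in let B := S1 `&` T2 in
    let C := S2 `&` T1 in let D := S2 `&` T2 in
    comul T1 T2 (mul x y)
      = (mul (comul A B x).1 (comul C D y).1,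
         mul (comul A B x).2 (comul C D y).2).

Definition is_connected_set_hopf_monoid : Prop :=
  ((is_connected_set_species) /\
   (is_set_monoid) /\
   (is_set_comonoid) /\
   (hopf_compatible)).

Definition commutative_hm : Prop :=
  forall x y, disj (supp x) (supp y) -> mul x y = mul y x.

Definition cocommutative_hm : Prop :=
  forall S T x, disj S T -> supp x = S `|` T ->
    comul T S x = ((comul S T x).2, (comul S T x).1).

(* le restricted to each fiber H[I] is the partial order on H[I];
   comparisons between different fibers are irrelevant. *)
Definition self_adjoint_wrt (le : X -> X -> Prop) : Prop :=
  (((forall x, le x x)) /\
   ((forall x y, supp x = supp y -> le x y -> le y x -> x = y)) /\
   ((forall x y z, supp x = supp y -> supp y = supp z ->
         le x y -> le y z -> le x z)) /\
   ((forall s x y, supp x = supp y -> {in supp x &, injective s} ->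
         le x y -> le (relab s x) (relab s y))) /\
   ((forall x x' y y', disj (supp x) (supp y) ->
         supp x = supp x' -> supp y = supp y' ->
         le x x' -> le y y' -> le (mul x y) (mul x' y'))) /\
   ((forall S T x x', disj S T -> supp x = S `|` T -> supp x' = S `|` T ->
         le x x' -> le (comul S T x).1 (comul S T x').1 /\
                    le (comul S T x).2 (comul S T x').2)) /\
   ((forall S T, disj S T ->
         (forall x y z, supp x = S `|` T -> supp y = S -> supp z = T ->
            (le (comul S T x).1 y /\ le (comul S T x).2 z <-> le x (mul y z)))
         \/
         (forall x y z, supp x = S `|` T -> supp y = S -> supp z = T ->
            (le (mul y z) x <-> le y (comul S T x).1 /\ le z (comul S T x).2))))).

Definition self_adjoint_some_poset : Prop :=
  exists le : X -> X -> Prop, self_adjoint_wrt le.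

End Hopf.

(* Main.v *)
Require Import Defs.
From mathcomp Require Import all_boot.
From mathcomp Require Import finmap.
Set Implicit Arguments. Unset Strict Implicit. Unset Printing Implicit Defensive.
Local Open Scope fset_scope.

Lemma disjP (S T : {fset nat}) : disj S T -> forall i, (i \in S) && (i \in T) = false.
Proof. move=> /eqP D i; have := congr1 (fun X => i \in X) D; by rewrite !inE. Qed.

Lemma disjI (S T : {fset nat}) : (forall i, (i \in S) && (i \in T) = false) -> disj S T.
Proof. move=> H; apply/eqP/fsetP=> i; rewrite !inE; exact: H. Qed.

Lemma subP (A B : {fset nat}) : A `<=` B -> forall i, (i \in A) ==> (i \in B).
Proof. by move=> /fsubsetP H i; apply/implyP=> /H. Qed.

Lemma card_lt (I J : {fset nat}) (c : nat) : J `<=` I -> c \in I -> c \notin J -> #|` J| < #|` I|.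
Proof.
move=> JI cI cJ; apply: fproper_ltn_card; rewrite fproperE JI /=.
by apply/negP=> /fsubsetP H; move: (H c cI); rewrite (negbTE cJ).
Qed.

Ltac rwneq := repeat match goal with
 | H : ?x <> ?y |- context [?x == ?y] => rewrite (introF eqP H)
 | H : ?x <> ?y |- context [?y == ?x] => rewrite (introF eqP (nesym H)) end.
Ltac brute := rwneq; rewrite ?eqxx /=; try done; match goal with
 | |- context [?x == ?y] => is_var x; is_var y; let Hn := fresh "Hn" in case: (x =P y) => Hn;
     [subst x | idtac]; brute
 | |- context [?x \in ?A] => case: (x \in A); brute
 end.

Ltac revb := repeat match goal with H : is_true _ |- _ => move: H end.

Section Hopf.
Variables (X : Type) (supp : X -> {fset nat}) (one : X)
  (mul : X -> X -> X) (comul : {fset nat} -> {fset nat} -> X -> X * X)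
  (relab : (nat -> nat) -> X -> X).

Ltac inst p := repeat match goal with
  | H : is_true (disj _ _) |- _ => move: (disjP H p); clear H
  | H : is_true (_ `<=` _) |- _ => move: (subP H p); clear H
  | H : ?A = _ |- _ =>
      (match A with supp _ => fail 1 | _ => idtac end);
      move: (congr1 (fun Z => p \in Z) H); clear H
  end.

Ltac fsolve := match goal with
  | |- is_true (disj _ _) => let i := fresh "i" in apply/disjI; intro i; inst i; revb; rewrite ?inE; brute
  | |- _ = _ => let i := fresh "i" in apply/fsetP; intro i; inst i; revb; rewrite ?inE; brute
  | |- is_true (_ `<=` _) => let i := fresh "i" in apply/fsubsetP; intro i; inst i; revb; rewrite ?inE; brute
  | |- is_true (~~ (?c \in _)) => inst c; revb; rewrite ?inE; brute
  | |- is_true (?c \in _) => inst c; revb; rewrite ?inE; brute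
  end.


Hypothesis Hone : supp one = fset0.
Hypothesis Hconn : forall x, supp x = fset0 -> x = one.
Hypothesis Hrsupp : forall s x, {in supp x &, injective s} ->
         supp (relab s x) = img s (supp x).
Hypothesis Hrext : forall s t x, {in supp x, s =1 t} -> relab s x = relab t x.
Hypothesis Hrid : forall x, relab (fun i => i) x = x.
Hypothesis Hrcomp : forall s t x, {in supp x &, injective s} ->
         {in img s (supp x) &, injective t} ->
         relab t (relab s x) = relab (t \o s) x.
Hypothesis Hmsupp : forall x y, disj (supp x) (supp y) ->
         supp (mul x y) = supp x `|` supp y.
Hypothesis Hmrelab : forall s x y, disj (supp x) (supp y) ->
         {in supp x `|` supp y &, injective s} ->
         relab s (mul x y) = mul (relab s x) (relab s y).
Hypothesis Hmassoc : forall x y z, disj (supp x) (supp y) -> disj (supp x) (supp z) ->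
         disj (supp y) (supp z) ->
         mul (mul x y) z = mul x (mul y z).
Hypothesis Hmunit : forall x, mul one x = x /\ mul x one = x.
Hypothesis Hcsupp : forall S T x, disj S T -> supp x = S `|` T ->
         supp (comul S T x).1 = S /\ supp (comul S T x).2 = T.
Hypothesis Hcrelab : forall s S T x, disj S T -> supp x = S `|` T ->
         {in S `|` T &, injective s} ->
         comul (img s S) (img s T) (relab s x)
           = (relab s (comul S T x).1, relab s (comul S T x).2).
Hypothesis Hcassoc : forall S T U x, disj S T -> disj S U -> disj T U ->
         supp x = S `|` T `|` U ->
         let: (x1, x23) := comul S (T `|` U) x in
         let: (x12, x3) := comul (S `|` T) U x in
         [/\ (comul S T x12).1 = x1, (comul S T x12).2 = (comul T U x23).1
           & x3 = (comul T U x23).2].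
Hypothesis Hcunit : forall x, (comul fset0 (supp x) x).2 = x /\
                 (comul (supp x) fset0 x).1 = x.
Hypothesis Hcompat : hopf_compatible supp mul comul.

Lemma mul1x x : mul one x = x. Proof. by case: (Hmunit x). Qed.
Lemma mulx1 x : mul x one = x. Proof. by case: (Hmunit x). Qed.

Lemma c1s S T x : disj S T -> supp x = S `|` T -> supp (comul S T x).1 = S.
Proof. by move=> D E; case: (Hcsupp D E). Qed.
Lemma c2s S T x : disj S T -> supp x = S `|` T -> supp (comul S T x).2 = T.
Proof. by move=> D E; case: (Hcsupp D E). Qed.

Lemma comul0l x : comul fset0 (supp x) x = (one, x).
Proof.
case: (Hcunit x) => H _; rewrite [LHS]surjective_pairing H; congr pair.
apply: Hconn; apply: c1s; fsolve.
Qed.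
Lemma comul0r x : comul (supp x) fset0 x = (x, one).
Proof.
case: (Hcunit x) => _ H; rewrite [LHS]surjective_pairing H; congr pair.
apply: Hconn; apply: c2s; fsolve.
Qed.
Lemma comul0l' S x : supp x = S -> comul fset0 S x = (one, x).
Proof. by move=> <-; apply: comul0l. Qed.
Lemma comul0r' S x : supp x = S -> comul S fset0 x = (x, one).
Proof. by move=> <-; apply: comul0r. Qed.

Lemma comul_mul y z : disj (supp y) (supp z) ->
  comul (supp y) (supp z) (mul y z) = (y, z).
Proof.
move=> D.
have := Hcompat (S1 := supp y) (S2 := supp z) (T1 := supp y) (T2 := supp z) D D erefl erefl erefl.
move=> /= ->.
have -> : supp y `&` supp y = supp y by fsolve.
have -> : supp y `&` supp z = fset0 by fsolve.
have -> : supp z `&` supp y = fset0 by fsolve.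
have -> : supp z `&` supp z = supp z by fsolve.
by rewrite comul0r comul0l /= mulx1 mul1x.
Qed.

Lemma comul_mulC y z : disj (supp y) (supp z) ->
  comul (supp z) (supp y) (mul y z) = (z, y).
Proof.
move=> D.
have D' : disj (supp z) (supp y) by fsolve.
have := Hcompat (S1 := supp y) (S2 := supp z) (T1 := supp z) (T2 := supp y) D D' (fsetUC _ _) erefl erefl.
move=> /= ->.
have -> : supp y `&` supp y = supp y by fsolve.
have -> : supp y `&` supp z = fset0 by fsolve.
have -> : supp z `&` supp y = fset0 by fsolve.
have -> : supp z `&` supp z = supp z by fsolve.
by rewrite comul0r comul0l /= mulx1 mul1x.
Qed.

Definition Cm S T x := mul (comul S T x).1 (comul S T x).2.

Lemma Cm_supp S T x : disj S T -> supp x = S `|` T -> supp (Cm S T x) = S `|` T.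
Proof. move=> D E; rewrite /Cm Hmsupp (c1s D E) ?(c2s D E) //. Qed.

Lemma CmK S T x : disj S T -> supp x = S `|` T -> Cm S T (Cm S T x) = Cm S T x.
Proof.
move=> D E; rewrite {1}/Cm.
have D' : disj (supp (comul S T x).1) (supp (comul S T x).2) by rewrite (c1s D E) (c2s D E).
have := comul_mul D'; rewrite (c1s D E) (c2s D E) => ->. done.
Qed.

Lemma relab_Cm s S T x : disj S T -> supp x = S `|` T -> {in S `|` T &, injective s} ->
  relab s (Cm S T x) = Cm (img s S) (img s T) (relab s x).
Proof.
move=> D E inj; rewrite /Cm Hcrelab //= Hmrelab //; first by rewrite (c1s D E) (c2s D E).
by rewrite (c1s D E) (c2s D E).
Qed.


Definition comm_below n := forall y z, disj (supp y) (supp z) ->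
  #|` supp y `|` supp z| < n -> mul y z = mul z y.
Definition cocomm_below n := forall A B x, disj A B -> supp x = A `|` B ->
  #|` A `|` B| < n -> comul B A x = ((comul A B x).2, (comul A B x).1).

Definition q1 A B C x := (comul A (B `|` C) x).1.
Definition q2 A B C x := (comul B C (comul A (B `|` C) x).2).1.
Definition q3 A B C x := (comul B C (comul A (B `|` C) x).2).2.

Lemma coas A B C x : disj A B -> disj A C -> disj B C -> supp x = A `|` B `|` C ->
  [/\ q1 A B C x = (comul A B (comul (A `|` B) C x).1).1,
      q2 A B C x = (comul A B (comul (A `|` B) C x).1).2 &
      q3 A B C x = (comul (A `|` B) C x).2].
Proof.
move=> dAB dAC dBC E; have := Hcassoc dAB dAC dBC E; rewrite /q1 /q2 /q3.
case: (comul A (B `|` C) x) => x1 x23; case: (comul (A `|` B) C x) => x12 x3 /=.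
by case=> -> -> ->.
Qed.

Lemma sw23 n A B C x : cocomm_below n -> disj A B -> disj A C -> disj B C ->
  supp x = A `|` B `|` C -> #|` B `|` C| < n ->
  [/\ q1 A C B x = q1 A B C x, q2 A C B x = q3 A B C x & q3 A C B x = q2 A B C x].
Proof.
move=> IHd dAB dAC dBC E lt; rewrite /q1 /q2 /q3 (fsetUC C B).
have E' : supp x = A `|` (B `|` C) by rewrite E; fsolve.
have dA : disj A (B `|` C) by fsolve.
have := IHd B C (comul A (B `|` C) x).2 dBC (c2s dA E') lt.
by move=> ->.
Qed.

Lemma sw12 n A B C x : cocomm_below n -> disj A B -> disj A C -> disj B C ->
  supp x = A `|` B `|` C -> #|` A `|` B| < n ->
  [/\ q1 B A C x = q2 A B C x, q2 B A C x = q1 A B C x & q3 B A C x = q3 A B C x].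
Proof.
move=> IHd dAB dAC dBC E lt.
have dBA : disj B A by fsolve.
have E' : supp x = B `|` A `|` C by rewrite E; fsolve.
case: (coas dAB dAC dBC E) => -> -> ->.
case: (coas dBA dBC dAC E') => -> -> ->.
rewrite (fsetUC B A).
have dAB' : disj (A `|` B) C by fsolve.
have E2 : supp x = (A `|` B) `|` C by [].
have := IHd A B (comul (A `|` B) C x).1 dAB (c1s dAB' E2) lt.
by move=> ->.
Qed.

Lemma rev3 n A B C x a b c : cocomm_below n -> disj A B -> disj A C -> disj B C ->
  supp x = A `|` B `|` C -> #|` A `|` B `|` C| = n ->
  a \in A -> b \in B -> c \in C ->
  [/\ q1 C B A x = q3 A B C x, q2 C B A x = q2 A B C x & q3 C B A x = q1 A B C x].
Proof.
move=> IHd dAB dAC dBC E En aA bB cC.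
have dCA : disj C A by fsolve.
have dCB : disj C B by fsolve.
have dBA : disj B A by fsolve.
have l1 : #|` B `|` C| < n by rewrite -En; apply: (card_lt (c := a)); fsolve.
have l2 : #|` A `|` C| < n by rewrite -En; apply: (card_lt (c := b)); fsolve.
have l3 : #|` A `|` B| < n by rewrite -En; apply: (card_lt (c := c)); fsolve.
have E2 : supp x = A `|` C `|` B by rewrite E; fsolve.
have E3 : supp x = C `|` A `|` B by rewrite E; fsolve.
case: (sw23 IHd dAB dAC dBC E l1) => s1 s2 s3.
case: (sw12 IHd dAC dAB dCB E2 l2) => t1 t2 t3.
case: (sw23 IHd dCA dCB dAB E3 l3) => u1 u2 u3.
by rewrite u1 u2 u3 t1 t2 t3 s1 s2 s3.
Qed.

Lemma q1s A B C x : disj A B -> disj A C -> disj B C -> supp x = A `|` B `|` C ->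
  supp (q1 A B C x) = A.
Proof. move=> *; apply: c1s; [fsolve| by rewrite fsetUA]. Qed.
Lemma q2s A B C x : disj A B -> disj A C -> disj B C -> supp x = A `|` B `|` C ->
  supp (q2 A B C x) = B.
Proof. move=> ? ? ? E; apply: c1s => //; apply: c2s; [fsolve| by rewrite fsetUA]. Qed.
Lemma q3s A B C x : disj A B -> disj A C -> disj B C -> supp x = A `|` B `|` C ->
  supp (q3 A B C x) = C.
Proof. move=> ? ? ? E; apply: c2s => //; apply: c2s; [fsolve| by rewrite fsetUA]. Qed.

Lemma rearr n P Q R W c b a : comm_below n ->
  disj (supp P) (supp Q) -> disj (supp P) (supp R) -> disj (supp P) (supp W) ->
  disj (supp Q) (supp R) -> disj (supp Q) (supp W) -> disj (supp R) (supp W) ->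
  #|` supp P `|` supp Q `|` supp R `|` supp W| = n ->
  c \in supp P -> b \in supp Q -> a \in supp R ->
  mul (mul P Q) (mul R W) = mul (mul W R) (mul Q P).
Proof.
move=> IHc dPQ dPR dPW dQR dQW dRW En cP bQ aR.
rewrite (IHc W R); last (by rewrite -En; apply: (card_lt (c := c)); fsolve); last by fsolve.
rewrite (IHc Q P); last (by rewrite -En; apply: (card_lt (c := a)); fsolve); last by fsolve.
have sB : supp (mul R W) = supp R `|` supp W by rewrite Hmsupp.
have sPQ : supp (mul P Q) = supp P `|` supp Q by rewrite Hmsupp.
rewrite Hmassoc; [|done|by rewrite sB; fsolve|by rewrite sB; fsolve].
rewrite -[RHS]Hmassoc; [|by rewrite sB; fsolve|by rewrite sB; fsolve|done].
rewrite (IHc (mul R W) P); [|by rewrite sB; fsolve|by rewrite sB -En; apply: (card_lt (c := b)); fsolve].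
rewrite Hmassoc; [|by rewrite sB; fsolve|done|by rewrite sB; fsolve].
rewrite (IHc (mul R W) Q) //; [by rewrite sB; fsolve|by rewrite sB -En; apply: (card_lt (c := c)); fsolve].
Qed.

Lemma UL n S T a b c x : comm_below n -> cocomm_below n -> disj S T ->
  a \in S -> b \in T -> c \in S `\ a -> supp x = S `|` T -> #|` S `|` T| = n ->
  Cm ((S `\ a) `|` [fset b]) ((T `\ b) `|` [fset a]) (Cm S T x)
  = Cm ((T `\ b) `|` [fset a]) ((S `\ a) `|` [fset b]) (Cm T S x).
Proof.
move=> IHc IHd dST aS bT cS0 E En.
have dTS : disj T S by fsolve.
have E' : supp x = T `|` S by rewrite E fsetUC.
have dS'T' : disj ((S `\ a) `|` [fset b]) ((T `\ b) `|` [fset a]) by fsolve.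
have dT'S' : disj ((T `\ b) `|` [fset a]) ((S `\ a) `|` [fset b]) by fsolve.
have eU : S `|` T = ((S `\ a) `|` [fset b]) `|` ((T `\ b) `|` [fset a]) by fsolve.
have eU' : T `|` S = ((T `\ b) `|` [fset a]) `|` ((S `\ a) `|` [fset b]) by fsolve.
have H1 := Hcompat dST dS'T' eU (c1s dST E) (c2s dST E); simpl in H1.
have H2 := Hcompat dTS dT'S' eU' (c1s dTS E') (c2s dTS E'); simpl in H2.
rewrite /Cm /= H1 H2 /= {H1 H2}.
have -> : S `&` ((S `\ a) `|` [fset b]) = S `\ a by fsolve.
have -> : S `&` ((T `\ b) `|` [fset a]) = [fset a] by fsolve.
have -> : T `&` ((S `\ a) `|` [fset b]) = [fset b] by fsolve.
have -> : T `&` ((T `\ b) `|` [fset a]) = T `\ b by fsolve.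
have d1 : disj (S `\ a) [fset a] by fsolve.
have d2 : disj (S `\ a) T by fsolve.
have d3 : disj [fset a] T by fsolve.
have Ex : supp x = (S `\ a) `|` [fset a] `|` T by rewrite E; fsolve.
have eS : (S `\ a) `|` [fset a] = S by fsolve.
have eS2 : [fset a] `|` (S `\ a) = S by fsolve.
have Y : comul (S `\ a) [fset a] (comul S T x).1
    = (q1 (S `\ a) [fset a] T x, q2 (S `\ a) [fset a] T x).
  by case: (coas d1 d2 d3 Ex) => -> -> _; rewrite eS -surjective_pairing.
have Z' : comul [fset a] (S `\ a) (comul T S x).2
    = (q2 T [fset a] (S `\ a) x, q3 T [fset a] (S `\ a) x).
  by rewrite /q2 /q3 eS2 -surjective_pairing.
have d4 : disj T [fset a] by fsolve.
have d5 : disj T (S `\ a) by fsolve.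
case: (rev3 IHd d1 d2 d3 Ex _ cS0 (fset11 a) bT); first by rewrite -Ex E.
move=> r1 r2 r3.
rewrite Y Z' /= r2 r3.
have sP := q1s d1 d2 d3 Ex; have sR := q2s d1 d2 d3 Ex.
have [T0e|T0ne] := eqVneq (T `\ b) fset0.
- have T0e' : T `\ b = fset0 by exact: T0e.
  clear T0e; have eT : T = [fset b] by fsolve.
  have sz : supp (comul S T x).2 = [fset b] by rewrite (c2s dST E).
  have sy' : supp (comul T S x).1 = fset0 `|` [fset b].
    by rewrite (c1s dTS E'); fsolve.
  rewrite T0e' (comul0r' sz) (comul0l' (esym _)); last by rewrite (c1s dTS E') eT.
  rewrite /=.
  have -> : (comul T S x).1 = (comul S T x).2.
    have Ex2 : supp x = (S `\ a) `|` [fset a] `|` [fset b] by rewrite Ex eT.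
    have d3' : disj [fset a] [fset b] by fsolve.
    have d2' : disj (S `\ a) [fset b] by fsolve.
    have d6 : disj [fset b] [fset a] by fsolve.
    case: (rev3 IHd d1 d2' d3' Ex2 _ cS0 (fset11 a) (fset11 b)); first by rewrite -Ex2 E.
    move=> t1 _ _.
    have : q1 [fset b] [fset a] (S `\ a) x = (comul T S x).1 by rewrite /q1 eS2 eT.
    move=> <-; rewrite t1.
    case: (coas d1 d2' d3' Ex2) => _ _ ->. by rewrite eS eT.
  apply: (rearr (c := c) (b := b) (a := a) IHc); rewrite ?sP ?sR ?Hone ?sz //; try fsolve.
  rewrite -En; apply: (congr1 (fun Z => #|` Z|)); fsolve.
- case/fset0Pn: T0ne => d dT0.
  have e1 : [fset b] `|` (T `\ b) = T by fsolve.
  have e2 : (T `\ b) `|` [fset b] = T by fsolve.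
  have f1 : disj S [fset b] by fsolve.
  have f2 : disj S (T `\ b) by fsolve.
  have f3 : disj [fset b] (T `\ b) by fsolve.
  have Ex3 : supp x = S `|` [fset b] `|` (T `\ b) by rewrite E; fsolve.
  have Z : comul [fset b] (T `\ b) (comul S T x).2
    = (q2 S [fset b] (T `\ b) x, q3 S [fset b] (T `\ b) x).
    by rewrite /q2 /q3 e1 -surjective_pairing.
  have g1 : disj (T `\ b) [fset b] by fsolve.
  have g2 : disj (T `\ b) S by fsolve.
  have g3 : disj [fset b] S by fsolve.
  have Ex4 : supp x = (T `\ b) `|` [fset b] `|` S by rewrite E; fsolve.
  have Y' : comul (T `\ b) [fset b] (comul T S x).1
    = (q1 (T `\ b) [fset b] S x, q2 (T `\ b) [fset b] S x).
    by case: (coas g1 g2 g3 Ex4) => -> -> _; rewrite e2 -surjective_pairing.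
  case: (rev3 IHd f1 f2 f3 Ex3 _ aS (fset11 b) dT0); first by rewrite -Ex3 E.
  move=> u1 u2 u3.
  rewrite Z Y' /= u1 u2.
  have sQ := q2s f1 f2 f3 Ex3; have sW := q3s f1 f2 f3 Ex3.
  apply: (rearr (c := c) (b := b) (a := a) IHc); rewrite ?sP ?sR ?sQ ?sW //; try fsolve.
  rewrite -En; apply: (congr1 (fun Z => #|` Z|)); fsolve.
Qed.

Definition tau (a b i : nat) := if i == a then b else if i == b then a else i.

Lemma tauK a b i : tau a b (tau a b i) = i.
Proof. rewrite /tau; brute. Qed.

Lemma tau_inj a b : injective (tau a b).
Proof. exact: (can_inj (tauK a b)). Qed.

Lemma in_img_tau a b (A : {fset nat}) i : (i \in img (tau a b) A) = (tau a b i \in A).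
Proof.
apply/imfsetP/idP => [[j jA ->]|H]; first by rewrite tauK.
by exists (tau a b i); rewrite ?tauK.
Qed.

Lemma img_tauS a b (A : {fset nat}) : a \in A -> b \notin A ->
  img (tau a b) A = (A `\ a) `|` [fset b].
Proof. move=> aA bA; apply/fsetP=> i; rewrite in_img_tau /tau; move: aA bA; rewrite ?inE; brute. Qed.

Lemma img_tauT a b (A : {fset nat}) : b \in A -> a \notin A ->
  img (tau a b) A = (A `\ b) `|` [fset a].
Proof. move=> aA bA; apply/fsetP=> i; rewrite in_img_tau /tau; move: aA bA; rewrite ?inE; brute. Qed.

Lemma img_tauU a b (A : {fset nat}) : a \in A -> b \in A -> img (tau a b) A = A.
Proof. move=> aA bA; apply/fsetP=> i; rewrite in_img_tau /tau; move: aA bA; rewrite ?inE; brute. Qed.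

Lemma relab_tauK a b x : relab (tau a b) (relab (tau a b) x) = x.
Proof.
have inj : forall A : {fset nat}, {in A &, injective (tau a b)} by move=> A i j _ _; apply: tau_inj.
rewrite Hrcomp // -[RHS]Hrid; apply: Hrext => i _ /=; exact: tauK.
Qed.


Lemma fix_ST S T : disj S T -> (forall x, supp x = S `|` T -> x = Cm S T x) ->
  (forall y z, supp y = S -> supp z = T -> mul y z = mul z y) /\
  (forall x, supp x = S `|` T -> comul T S x = ((comul S T x).2, (comul S T x).1)).
Proof.
move=> dST H; split.
- move=> y z sy sz.
  have dzy : disj (supp z) (supp y) by rewrite sy sz; fsolve.
  have E : supp (mul z y) = S `|` T by rewrite Hmsupp // sy sz fsetUC.
  rewrite [RHS]H // /Cm.
  by have := comul_mulC dzy; rewrite sy sz => ->.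
- move=> x E.
  have -> : comul T S x = comul T S (Cm S T x) by rewrite -H.
  have dd : disj (supp (comul S T x).1) (supp (comul S T x).2) by rewrite (c1s dST E) (c2s dST E).
  by have := comul_mulC dd; rewrite (c1s dST E) (c2s dST E) /Cm => ->.
Qed.

Lemma fix_TS S T : disj S T -> (forall x, supp x = S `|` T -> x = Cm T S x) ->
  (forall y z, supp y = S -> supp z = T -> mul y z = mul z y) /\
  (forall x, supp x = S `|` T -> comul T S x = ((comul S T x).2, (comul S T x).1)).
Proof.
move=> dST H.
have dTS : disj T S by fsolve.
split.
- move=> y z sy sz.
  have dyz : disj (supp y) (supp z) by rewrite sy sz.
  have E : supp (mul y z) = S `|` T by rewrite Hmsupp // sy sz.
  rewrite [LHS]H // /Cm.
  by have := comul_mulC dyz; rewrite sy sz => ->.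
- move=> x E.
  have E' : supp x = T `|` S by rewrite E fsetUC.
  have -> : comul S T x = comul S T (Cm T S x) by rewrite -H.
  have dd : disj (supp (comul T S x).1) (supp (comul T S x).2) by rewrite (c1s dTS E') (c2s dTS E').
  have := comul_mulC dd; rewrite (c1s dTS E') (c2s dTS E') /Cm => -> /=.
  by rewrite -surjective_pairing.
Qed.

Section Forward.
Variable le : X -> X -> Prop.
Hypothesis Lrefl : forall x, le x x.
Hypothesis Lanti : forall x y, supp x = supp y -> le x y -> le y x -> x = y.
Hypothesis Ltrans : forall x y z, supp x = supp y -> supp y = supp z ->
         le x y -> le y z -> le x z.
Hypothesis Lrelab : forall s x y, supp x = supp y -> {in supp x &, injective s} ->
         le x y -> le (relab s x) (relab s y).
Hypothesis Lcomul : forall S T x x', disj S T -> supp x = S `|` T -> supp x' = S `|` T ->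
         le x x' -> le (comul S T x).1 (comul S T x').1 /\
                    le (comul S T x).2 (comul S T x').2.
Hypothesis Lgal : forall S T, disj S T ->
         (forall x y z, supp x = S `|` T -> supp y = S -> supp z = T ->
            (le (comul S T x).1 y /\ le (comul S T x).2 z <-> le x (mul y z)))
         \/
         (forall x y z, supp x = S `|` T -> supp y = S -> supp z = T ->
            (le (mul y z) x <-> le y (comul S T x).1 /\ le z (comul S T x).2)).

Lemma transport S T a b x : disj S T -> a \in S -> b \in T ->
  (forall x, supp x = S `|` T -> le x (Cm S T x)) ->
  (forall x, supp x = S `|` T -> le (Cm T S x) x) ->
  supp x = S `|` T ->
  le x (Cm ((S `\ a) `|` [fset b]) ((T `\ b) `|` [fset a]) x) /\
  le (Cm ((T `\ b) `|` [fset a]) ((S `\ a) `|` [fset b]) x) x.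
Proof.
move=> dST aS bT Hup Hlo E.
have inj : forall A : {fset nat}, {in A &, injective (tau a b)} by move=> A i j _ _; apply: tau_inj.
have bS : b \notin S by fsolve.
have aT : a \notin T by fsolve.
have eU : img (tau a b) (S `|` T) = S `|` T by apply: img_tauU; fsolve.
have E0 : supp (relab (tau a b) x) = S `|` T by rewrite Hrsupp // E eU.
have dTS : disj T S by fsolve.
have E0' : supp (relab (tau a b) x) = T `|` S by rewrite E0 fsetUC.
split.
- have := Lrelab (etrans E0 (esym (Cm_supp dST E0))) (inj _) (Hup _ E0).
  by rewrite relab_tauK relab_Cm // relab_tauK (img_tauS aS bS) (img_tauT bT aT).
- have := Lrelab (etrans (Cm_supp dTS E0') (esym E0')) (inj _) (Hlo _ E0).
  by rewrite relab_tauK relab_Cm // relab_tauK (img_tauS aS bS) (img_tauT bT aT).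
Qed.

Lemma core n S T a b x : comm_below n -> cocomm_below n -> disj S T ->
  a \in S -> b \in T -> #|` S `|` T| = n ->
  (forall x, supp x = S `|` T -> le x (Cm S T x)) ->
  (forall x, supp x = S `|` T -> le (Cm T S x) x) ->
  supp x = S `|` T -> x = Cm S T x.
Proof.
move=> IHc IHd dST aS bT En Hup Hlo E.
have dTS : disj T S by fsolve.
have E' : supp x = T `|` S by rewrite E fsetUC.
have sST : supp (Cm S T x) = S `|` T by apply: Cm_supp.
have sTS : supp (Cm T S x) = S `|` T by rewrite Cm_supp // fsetUC.
have dS'T' : disj ((S `\ a) `|` [fset b]) ((T `\ b) `|` [fset a]) by fsolve.
have eU : S `|` T = ((S `\ a) `|` [fset b]) `|` ((T `\ b) `|` [fset a]) by fsolve.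
have dT'S' : disj ((T `\ b) `|` [fset a]) ((S `\ a) `|` [fset b]) by fsolve.
have eU' : S `|` T = ((T `\ b) `|` [fset a]) `|` ((S `\ a) `|` [fset b]) by fsolve.
have sU1 : supp (Cm ((S `\ a) `|` [fset b]) ((T `\ b) `|` [fset a]) (Cm S T x)) = S `|` T.
  by rewrite Cm_supp //; rewrite ?sST -?eU.
have sU2 : supp (Cm ((T `\ b) `|` [fset a]) ((S `\ a) `|` [fset b]) (Cm T S x)) = S `|` T.
  by rewrite Cm_supp //; rewrite ?sTS -?eU'.
apply: Lanti; [by rewrite sST | exact: Hup |].
have [S0e|S0ne] := eqVneq (S `\ a) fset0.
  have [T0e|T0ne] := eqVneq (T `\ b) fset0.
    have S0e' : S `\ a = fset0 by exact: S0e.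
    have T0e' : T `\ b = fset0 by exact: T0e.
    clear S0e T0e.
    case: (transport dST aS bT Hup Hlo E) => _.
    have -> : (T `\ b) `|` [fset a] = S by fsolve.
    by have -> : (S `\ a) `|` [fset b] = T by fsolve.
  case/fset0Pn: T0ne => d dT0.
  have := UL IHc IHd dTS bT aS dT0 E' _; rewrite fsetUC => /(_ En) UL'.
  apply: (@Ltrans _ (Cm ((S `\ a) `|` [fset b]) ((T `\ b) `|` [fset a]) (Cm S T x))).
  - by rewrite sST sU1.
  - by rewrite sU1 E.
  - by case: (transport dST aS bT Hup Hlo sST).
  rewrite -UL'.
  apply: (@Ltrans _ (Cm T S x)).
  - by rewrite sU2 sTS.
  - by rewrite sTS E.
  - by case: (transport dST aS bT Hup Hlo sTS).
  exact: Hlo.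
case/fset0Pn: S0ne => c cS0.
have UL' := UL IHc IHd dST aS bT cS0 E En.
apply: (@Ltrans _ (Cm ((S `\ a) `|` [fset b]) ((T `\ b) `|` [fset a]) (Cm S T x))).
- by rewrite sST sU1.
- by rewrite sU1 E.
- by case: (transport dST aS bT Hup Hlo sST).
rewrite UL'.
apply: (@Ltrans _ (Cm T S x)).
- by rewrite sU2 sTS.
- by rewrite sTS E.
- by case: (transport dST aS bT Hup Hlo sTS).
exact: Hlo.
Qed.

Lemma pairL n S T : comm_below n -> cocomm_below n -> disj S T -> #|` S `|` T| = n ->
  (forall y z, supp y = S -> supp z = T -> mul y z = mul z y) /\
  (forall x, supp x = S `|` T -> comul T S x = ((comul S T x).2, (comul S T x).1)).
Proof.
move=> IHc IHd dST En.
have dTS : disj T S by fsolve.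
have [S0|/fset0Pn [a aS]] := eqVneq S fset0.
  split.
    by move=> y z sy sz; rewrite (Hconn (etrans sy S0)) mul1x mulx1.
  move=> x E; have E' : supp x = T by rewrite E S0; fsolve.
  by rewrite S0 (comul0r' E') (comul0l' E').
have [T0|/fset0Pn [b bT]] := eqVneq T fset0.
  split.
    by move=> y z sy sz; rewrite (Hconn (etrans sz T0)) mul1x mulx1.
  move=> x E; have E' : supp x = S by rewrite E T0; fsolve.
  by rewrite T0 (comul0r' E') (comul0l' E').
have up1 : forall A B, disj A B ->
   (forall x y z, supp x = A `|` B -> supp y = A -> supp z = B ->
      (le (comul A B x).1 y /\ le (comul A B x).2 z <-> le x (mul y z))) ->
   (forall x, supp x = A `|` B -> le x (Cm A B x)) /\
   (forall y z, supp y = A -> supp z = B -> le (mul z y) (mul y z)).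
  move=> A B dAB G; split.
    move=> x E; apply/(G x) => //; [exact: c1s|exact: c2s].
  move=> y z sy sz.
  have dzy : disj (supp z) (supp y) by rewrite sy sz; fsolve.
  have E : supp (mul z y) = A `|` B by rewrite Hmsupp // sy sz fsetUC.
  apply/(G _ y z E sy sz).
  by have := comul_mulC dzy; rewrite sy sz => ->.
have lo2 : forall A B, disj A B ->
   (forall x y z, supp x = A `|` B -> supp y = A -> supp z = B ->
      (le (mul y z) x <-> le y (comul A B x).1 /\ le z (comul A B x).2)) ->
   (forall x, supp x = A `|` B -> le (Cm A B x) x) /\
   (forall y z, supp y = A -> supp z = B -> le (mul y z) (mul z y)).
  move=> A B dAB G; split.
    move=> x E; apply/(G x) => //; [exact: c1s|exact: c2s].
  move=> y z sy sz.
  have dzy : disj (supp z) (supp y) by rewrite sy sz; fsolve.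
  have E : supp (mul z y) = A `|` B by rewrite Hmsupp // sy sz fsetUC.
  apply/(G _ y z E sy sz).
  by have := comul_mulC dzy; rewrite sy sz => ->.
have sm : forall y z, supp y = S -> supp z = T -> supp (mul y z) = supp (mul z y).
  move=> y z sy sz; rewrite !Hmsupp ?sy ?sz; [fsolve|fsolve|fsolve].
have E2 : forall x, supp x = S `|` T -> supp x = T `|` S by move=> x ->; rewrite fsetUC.
have cocoA : forall x, supp x = S `|` T ->
   le x (Cm S T x) -> le x (Cm T S x) -> 
   comul T S x = ((comul S T x).2, (comul S T x).1).
  move=> x E h1 h2.
  have s1 : supp (Cm S T x) = T `|` S by rewrite Cm_supp // fsetUC.
  have s2 : supp (Cm T S x) = S `|` T by rewrite Cm_supp; [rewrite fsetUC|done|exact: E2].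
  case: (Lcomul dTS (E2 _ E) s1 h1).
  have dd : disj (supp (comul S T x).1) (supp (comul S T x).2) by rewrite (c1s dST E) (c2s dST E).
  have := comul_mulC dd; rewrite (c1s dST E) (c2s dST E) /Cm => -> /= k1 k2.
  case: (Lcomul dST E s2 h2).
  have dd' : disj (supp (comul T S x).1) (supp (comul T S x).2) by rewrite (c1s dTS (E2 _ E)) (c2s dTS (E2 _ E)).
  have := comul_mulC dd'; rewrite (c1s dTS (E2 _ E)) (c2s dTS (E2 _ E)) /Cm => -> /= k3 k4.
  rewrite [LHS]surjective_pairing; congr pair; apply: Lanti => //.
  - by rewrite (c1s dTS (E2 _ E)) (c2s dST E).
  - by rewrite (c2s dTS (E2 _ E)) (c1s dST E).
have cocoB : forall x, supp x = S `|` T ->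
   le (Cm S T x) x -> le (Cm T S x) x -> 
   comul T S x = ((comul S T x).2, (comul S T x).1).
  move=> x E h1 h2.
  have s1 : supp (Cm S T x) = T `|` S by rewrite Cm_supp // fsetUC.
  have s2 : supp (Cm T S x) = S `|` T by rewrite Cm_supp; [rewrite fsetUC|done|exact: E2].
  case: (Lcomul dTS s1 (E2 _ E) h1).
  have dd : disj (supp (comul S T x).1) (supp (comul S T x).2) by rewrite (c1s dST E) (c2s dST E).
  have := comul_mulC dd; rewrite (c1s dST E) (c2s dST E) /Cm => -> /= k1 k2.
  case: (Lcomul dST s2 E h2).
  have dd' : disj (supp (comul T S x).1) (supp (comul T S x).2) by rewrite (c1s dTS (E2 _ E)) (c2s dTS (E2 _ E)).
  have := comul_mulC dd'; rewrite (c1s dTS (E2 _ E)) (c2s dTS (E2 _ E)) /Cm => -> /= k3 k4.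
  rewrite [LHS]surjective_pairing; congr pair; apply: Lanti => //.
  - by rewrite (c1s dTS (E2 _ E)) (c2s dST E).
  - by rewrite (c2s dTS (E2 _ E)) (c1s dST E).
case: (Lgal dST) => G1; case: (Lgal dTS) => G2.
- case: (up1 _ _ dST G1) => u1 p1; case: (up1 _ _ dTS G2) => u2 p2.
  split.
    by move=> y z sy sz; apply: Lanti; [exact: sm | exact: p2 | exact: p1].
  by move=> x E; apply: cocoA => //; [exact: u1 | apply: u2; exact: E2].
- case: (up1 _ _ dST G1) => u1 _; case: (lo2 _ _ dTS G2) => l2 _.
  apply: (fix_ST dST) => x E; apply: (core IHc IHd dST aS bT En u1 _ E).
  by move=> x' E'; apply: l2; exact: E2.
- case: (lo2 _ _ dST G1) => l1 _; case: (up1 _ _ dTS G2) => u2 _.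
  apply: (fix_TS dST) => x E.
  have En' : #|` T `|` S| = n by rewrite fsetUC.
  apply: (core IHc IHd dTS bT aS En' u2 _ (E2 _ E)).
  by move=> x' E'; apply: l1; rewrite E' fsetUC.
- case: (lo2 _ _ dST G1) => l1 p1; case: (lo2 _ _ dTS G2) => l2 p2.
  split.
    by move=> y z sy sz; apply: Lanti; [exact: sm | exact: p1 | exact: p2].
  by move=> x E; apply: cocoB => //; [exact: l1 | apply: l2; exact: E2].
Qed.

Lemma forward_all n : comm_below n /\ cocomm_below n.
Proof.
elim: n => [|n [IHc IHd]]; first by split.
split.
- move=> y z d lt; have [lt'|ge] := ltnP #|` supp y `|` supp z| n; first exact: IHc.
  have En : #|` supp y `|` supp z| = n by apply/eqP; rewrite eqn_leq ge -ltnS lt.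
  by case: (pairL IHc IHd d En) => H _; apply: H.
- move=> A B x d E lt; have [lt'|ge] := ltnP #|` A `|` B| n; first exact: IHd.
  have En : #|` A `|` B| = n by apply/eqP; rewrite eqn_leq ge -ltnS lt.
  by case: (pairL IHc IHd d En) => _ H; apply: H.
Qed.

Lemma forward : commutative_hm supp mul /\ cocommutative_hm supp comul.
Proof.
split.
- move=> x y d; case: (forward_all (#|` supp x `|` supp y|).+1) => H _; exact: H.
- move=> S T x d E; case: (forward_all (#|` S `|` T|).+1) => _ H; exact: H.
Qed.

End Forward.

Section Backward.
Hypothesis Hcomm : commutative_hm supp mul.
Hypothesis Hcoc : cocommutative_hm supp comul.

Definition r A x := (comul A (supp x `\` A) x).1.

Lemma r_supp A x : A `<=` supp x -> supp (r A x) = A.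
Proof. move=> sub; apply: c1s; fsolve. Qed.

Lemma comul_r S T x : disj S T -> supp x = S `|` T -> comul S T x = (r S x, r T x).
Proof.
move=> D E; rewrite /r.
have -> : supp x `\` S = T by rewrite E; fsolve.
have -> : supp x `\` T = S by rewrite E; fsolve.
by rewrite (Hcoc D E) /= -surjective_pairing.
Qed.

Lemma Cm_r S T x : disj S T -> supp x = S `|` T -> Cm S T x = mul (r S x) (r T x).
Proof. by move=> D E; rewrite /Cm (comul_r D E). Qed.

Lemma r_r A B x : A `<=` B -> B `<=` supp x -> r A (r B x) = r A x.
Proof.
move=> AB Bx.
have d1 : disj A (B `\` A) by fsolve.
have d2 : disj A (supp x `\` B) by fsolve.
have d3 : disj (B `\` A) (supp x `\` B) by fsolve.
have E : supp x = A `|` (B `\` A) `|` (supp x `\` B) by fsolve.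
have := Hcassoc d1 d2 d3 E.
have -> : (B `\` A) `|` (supp x `\` B) = supp x `\` A by fsolve.
have -> : A `|` (B `\` A) = B by fsolve.
have sB : supp (r B x) = B by apply: r_supp.
rewrite {1}/r sB /r.
case: (comul A (supp x `\` A) x) => x1 x23; case: (comul B (supp x `\` B) x) => x12 x3 /=.
by case.
Qed.

Lemma r_mul A x y : disj (supp x) (supp y) -> A `<=` supp x `|` supp y ->
  r A (mul x y) = mul (r (supp x `&` A) x) (r (supp y `&` A) y).
Proof.
move=> d sub.
have dA : disj A ((supp x `|` supp y) `\` A) by fsolve.
have eA : supp x `|` supp y = A `|` ((supp x `|` supp y) `\` A) by fsolve.
have H := Hcompat d dA eA erefl erefl; simpl in H.
rewrite {1}/r Hmsupp // H /=.
have d1 : disj (supp x `&` A) (supp x `&` ((supp x `|` supp y) `\` A)) by fsolve.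
have e1 : supp x = (supp x `&` A) `|` (supp x `&` ((supp x `|` supp y) `\` A)) by fsolve.
have d2 : disj (supp y `&` A) (supp y `&` ((supp x `|` supp y) `\` A)) by fsolve.
have e2 : supp y = (supp y `&` A) `|` (supp y `&` ((supp x `|` supp y) `\` A)) by fsolve.
by rewrite (comul_r d1 e1) (comul_r d2 e2).
Qed.

Lemma r_full x : r (supp x) x = x.
Proof. by rewrite /r fsetDv comul0r. Qed.

Lemma r_empty x : r fset0 x = one.
Proof. by apply: Hconn; apply: r_supp; fsolve. Qed.

Lemma r_sub A B x : A `<=` B -> supp x = B -> supp (r A x) = A.
Proof. by move=> AB E; apply: r_supp; rewrite E. Qed.

Lemma mul4 a b c d :
  disj (supp a) (supp b) -> disj (supp a) (supp c) -> disj (supp a) (supp d) ->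
  disj (supp b) (supp c) -> disj (supp b) (supp d) -> disj (supp c) (supp d) ->
  mul (mul a b) (mul c d) = mul (mul a c) (mul b d).
Proof.
move=> dab dac dad dbc dbd dcd.
have scd : supp (mul c d) = supp c `|` supp d by rewrite Hmsupp.
have sbd : supp (mul b d) = supp b `|` supp d by rewrite Hmsupp.
have sbc : supp (mul b c) = supp b `|` supp c by rewrite Hmsupp.
have scb : supp (mul c b) = supp c `|` supp b by rewrite Hmsupp //; fsolve.
rewrite Hmassoc //; try (rewrite scd; fsolve).
rewrite -(Hmassoc dbc dbd dcd) (Hcomm dbc).
rewrite Hmassoc //; try fsolve.
rewrite -Hmassoc //; rewrite sbd; fsolve.
Qed.

Lemma split_step U V S T x : disj U V -> supp x = U `|` V -> x = Cm U V x ->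
  disj S T -> supp x = S `|` T -> Cm S T x = Cm U V (Cm S T x).
Proof.
move=> dUV EU Hx dST ES.
have EST : S `|` T = U `|` V by rewrite -ES.
have sy : supp (Cm S T x) = U `|` V by rewrite Cm_supp // -ES.
have sS : S `<=` supp x by rewrite ES; clear; fsolve.
have sT : T `<=` supp x by rewrite ES; clear; fsolve.
have sU : U `<=` supp x by rewrite EU; clear; fsolve.
have sV : V `<=` supp x by rewrite EU; clear; fsolve.
have srS := r_supp sS; have srT := r_supp sT; have srU := r_supp sU; have srV := r_supp sV.
have dST' : disj (supp (r S x)) (supp (r T x)) by rewrite srS srT.
have dUV' : disj (supp (r U x)) (supp (r V x)) by rewrite srU srV.
have Hx' : x = mul (r U x) (r V x) by rewrite {1}Hx Cm_r.
have iS : forall A B : {fset nat}, A `&` B `<=` B by clear; move=> *; fsolve.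
have iS' : forall A B : {fset nat}, A `&` B `<=` A by clear; move=> *; fsolve.
have rS : r S x = mul (r (S `&` U) x) (r (S `&` V) x).
  rewrite {1}Hx' r_mul //; last by rewrite srU srV; clear -EST; fsolve.
  rewrite srU srV !r_r //.
  by rewrite (fsetIC U S) (fsetIC V S).
have rT : r T x = mul (r (T `&` U) x) (r (T `&` V) x).
  rewrite {1}Hx' r_mul //; last by rewrite srU srV; clear -EST; fsolve.
  rewrite srU srV !r_r //.
  by rewrite (fsetIC U T) (fsetIC V T).
have ey : Cm S T x = mul (r S x) (r T x) by rewrite Cm_r.
have rU : r U (Cm S T x) = mul (r (S `&` U) x) (r (T `&` U) x).
  rewrite ey r_mul //; last by rewrite srS srT -ES.
  by rewrite srS srT !r_r.
have rV : r V (Cm S T x) = mul (r (S `&` V) x) (r (T `&` V) x).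
  rewrite ey r_mul //; last by rewrite srS srT -ES.
  by rewrite srS srT !r_r.
rewrite [RHS]Cm_r // rU rV {1}ey rS rT.
have s1 : supp (r (S `&` U) x) = S `&` U by apply: r_supp; apply: fsubset_trans sS.
have s2 : supp (r (S `&` V) x) = S `&` V by apply: r_supp; apply: fsubset_trans sS.
have s3 : supp (r (T `&` U) x) = T `&` U by apply: r_supp; apply: fsubset_trans sT.
have s4 : supp (r (T `&` V) x) = T `&` V by apply: r_supp; apply: fsubset_trans sT.
apply: mul4; rewrite ?s1 ?s2 ?s3 ?s4; clear -dUV dST; fsolve.
Qed.

Definition step x y := exists S T, [/\ disj S T, supp x = S `|` T & y = Cm S T x].
Inductive lec : X -> X -> Prop :=
 | lec_refl x : lec x x
 | lec_step x y z : step x y -> lec y z -> lec x z.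

Lemma step_supp x y : step x y -> supp y = supp x.
Proof. by case=> S [T [D E ->]]; rewrite Cm_supp. Qed.

Lemma lec_supp x y : lec x y -> supp y = supp x.
Proof. elim=> [//|a b c /step_supp sb _ IH]; by rewrite IH sb. Qed.

Lemma lec_trans x y z : lec x y -> lec y z -> lec x z.
Proof.
move=> h; elim: h z => [//|a b c st _ IH] z hcz.
exact: (lec_step st (IH _ hcz)).
Qed.

Lemma lec1 x y : step x y -> lec x y.
Proof. by move=> st; apply: (lec_step st); apply: lec_refl. Qed.

Lemma lec_split x y : lec x y -> forall U V, disj U V -> supp x = U `|` V ->
  x = Cm U V x -> y = Cm U V y.
Proof.
elim=> [//|a b c st _ IH] U V D E fx; apply: IH => //.
  by rewrite (step_supp st).
case: st => S [T [dST ES ->]]; exact: split_step.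
Qed.

Lemma lec_anti_aux x y : lec x y ->
  (forall U V, disj U V -> supp x = U `|` V -> y = Cm U V y -> x = Cm U V x) -> x = y.
Proof.
elim=> [//|a b c st lbc IH] H.
case: (st) => S [T [dST Ea eb]].
have Eb : supp b = S `|` T by rewrite (step_supp st).
have bfix : b = Cm S T b by rewrite eb CmK.
have cfix := lec_split lbc dST Eb bfix.
have afix := H S T dST Ea cfix.
have ab : a = b by rewrite eb -afix.
rewrite ab; apply: IH => U V D E cf; rewrite -ab; apply: H => //; by rewrite ab.
Qed.

Lemma lec_anti x y : lec x y -> lec y x -> x = y.
Proof.
move=> h1 h2; apply: (lec_anti_aux h1) => U V D E cf.
apply: (lec_split h2 D) => //; by rewrite (lec_supp h1).
Qed.

Lemma img_disj s S T : disj S T -> {in S `|` T &, injective s} -> disj (img s S) (img s T).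
Proof.
move=> D inj; apply/disjI => i; apply/negbTE/negP => /andP [/imfsetP [j jS ->] /imfsetP [k kT e]].
have jk : j = k by apply: inj => //; rewrite inE ?jS ?kT ?orbT.
by move: (disjP D j); rewrite jS jk kT.
Qed.

Lemma step_relab s x y : step x y -> {in supp x &, injective s} -> step (relab s x) (relab s y).
Proof.
case=> S [T [D E ->]] inj; exists (img s S), (img s T); split.
- by apply: img_disj; move: inj; rewrite E.
- by rewrite Hrsupp // E /img imfsetU.
- by rewrite relab_Cm //; move: inj; rewrite E.
Qed.

Lemma lec_relab s x y : lec x y -> {in supp x &, injective s} -> lec (relab s x) (relab s y).
Proof.
elim=> [x0|a b c st lbc IH] inj; first exact: lec_refl.
apply: (lec_step (step_relab st inj)); apply: IH; by rewrite (step_supp st).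
Qed.

Lemma mul3sw p q y : disj (supp p) (supp q) -> disj (supp p) (supp y) -> disj (supp q) (supp y) ->
  mul (mul p q) y = mul (mul p y) q.
Proof.
move=> dpq dpy dqy.
have dyq : disj (supp y) (supp q) by clear -dqy; fsolve.
by rewrite Hmassoc // (Hcomm dqy) -Hmassoc.
Qed.

Lemma step_mull x x' y : step x x' -> disj (supp x) (supp y) -> step (mul x y) (mul x' y).
Proof.
case=> S [T [D E ->]] d; exists (S `|` supp y), T.
rewrite E in d.
split.
- by clear -D d; fsolve.
- by rewrite Hmsupp ?E //; clear; fsolve.
have sxy : supp x `|` supp y = (S `|` supp y) `|` T by rewrite E; clear; fsolve.
have sS : S `<=` supp x by rewrite E; clear; fsolve.
have sT : T `<=` supp x by rewrite E; clear; fsolve.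
rewrite (Cm_r (x := mul x y)); first last.
- by rewrite Hmsupp // E.
- by clear -D d; fsolve.
rewrite !r_mul ?E //; try (clear; fsolve).
have -> : (S `|` T) `&` (S `|` supp y) = S by clear -D d; fsolve.
have -> : supp y `&` (S `|` supp y) = supp y by clear; fsolve.
have -> : (S `|` T) `&` T = T by clear; fsolve.
have -> : supp y `&` T = fset0 by clear -D d; fsolve.
rewrite r_full r_empty mulx1 Cm_r //.
rewrite mul3sw ?(r_supp sS) ?(r_supp sT) //; clear -D d; fsolve.
Qed.

Lemma step_mulr x y y' : step y y' -> disj (supp x) (supp y) -> step (mul x y) (mul x y').
Proof.
move=> st d.
have d' : disj (supp x) (supp y') by rewrite (step_supp st).
have dyx : disj (supp y) (supp x) by clear -d; fsolve.
rewrite (Hcomm d) (Hcomm d'); exact: step_mull.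
Qed.

Lemma lec_mull x x' y : lec x x' -> disj (supp x) (supp y) -> lec (mul x y) (mul x' y).
Proof.
elim=> [x0|a b c st lbc IH] d; first exact: lec_refl.
apply: (lec_step (step_mull st d)); apply: IH; by rewrite (step_supp st).
Qed.

Lemma lec_mulr x y y' : lec y y' -> disj (supp x) (supp y) -> lec (mul x y) (mul x y').
Proof.
elim=> [y0|a b c st lbc IH] d; first exact: lec_refl.
apply: (lec_step (step_mulr st d)); apply: IH; by rewrite (step_supp st).
Qed.

Lemma lec_mul x x' y y' : lec x x' -> lec y y' -> disj (supp x) (supp y) ->
  lec (mul x y) (mul x' y').
Proof.
move=> h1 h2 d; apply: (lec_trans (lec_mull h1 d)); apply: lec_mulr => //.
by rewrite (lec_supp h1).
Qed.

Lemma step_r A x x' : step x x' -> A `<=` supp x -> step (r A x) (r A x').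
Proof.
case=> U [V [D E ->]] sub.
have sA : supp (r A x) = A := r_supp sub.
have sU : U `<=` supp x by rewrite E; clear; fsolve.
have sV : V `<=` supp x by rewrite E; clear; fsolve.
have eA : A = (U `&` A) `|` (V `&` A) by move: sub; rewrite E; clear; move=> sub; fsolve.
exists (U `&` A), (V `&` A); split.
- by clear -D; fsolve.
- by rewrite sA.
rewrite [RHS]Cm_r; [|by clear -D; fsolve|by rewrite sA].
rewrite Cm_r // r_mul; [|by rewrite (r_supp sU) (r_supp sV)|by rewrite (r_supp sU) (r_supp sV) -E].
by rewrite (r_supp sU) (r_supp sV) !r_r // ?fsubsetIl ?fsubsetIr.
Qed.

Lemma lec_r A x x' : lec x x' -> A `<=` supp x -> lec (r A x) (r A x').
Proof.
elim=> [x0|a b c st lbc IH] sub; first exact: lec_refl.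
apply: (lec_step (step_r st sub)); apply: IH; by rewrite (step_supp st).
Qed.

Lemma lec_comul S T x x' : disj S T -> supp x = S `|` T -> lec x x' ->
  lec (comul S T x).1 (comul S T x').1 /\ lec (comul S T x).2 (comul S T x').2.
Proof.
move=> D E h.
have E' : supp x' = S `|` T by rewrite (lec_supp h).
rewrite (comul_r D E) (comul_r D E') /=; split; apply: lec_r => //; rewrite E; clear; fsolve.
Qed.

Lemma backward : self_adjoint_some_poset supp mul comul relab.
Proof.
exists lec; split; first exact: lec_refl.
split; first by move=> x y _; exact: lec_anti.
split; first by move=> x y z _ _; exact: lec_trans.
split; first by move=> s x y _ inj h; exact: lec_relab.
split; first by move=> x x' y y' d _ _ h1 h2; exact: lec_mul.
split; first by move=> S T x x' D E _ h; exact: lec_comul.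
move=> S T D; left=> x y z E sy sz; split.
- case=> h1 h2; apply: (@lec_trans _ (Cm S T x)).
    by apply: lec1; exists S, T.
  by rewrite /Cm; apply: lec_mul => //; rewrite (c1s D E) (c2s D E).
- move=> h.
  have dyz : disj (supp y) (supp z) by rewrite sy sz.
  case: (lec_comul D E h).
  by have := comul_mul dyz; rewrite sy sz => ->.
Qed.

End Backward.
End Hopf.

Unset Implicit Arguments.

Theorem mainTheorem11 (X : Type) (supp : X -> {fset nat}) (one : X)
  (mul : X -> X -> X) (comul : {fset nat} -> {fset nat} -> X -> X * X)
  (relab : (nat -> nat) -> X -> X) :
  is_connected_set_hopf_monoid supp one mul comul relab ->
  (self_adjoint_some_poset supp mul comul relab <->
   commutative_hm supp mul /\ cocommutative_hm supp comul).
Proof.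
case=> [[_ [H1 [H2 [H3 [H4 [H5 H6]]]]]] [[M1 [M2 [M3 M4]]] [[C1 [C2 [C3 C4]]] HC]]].
split.
- case=> le [L1 [L2 [L3 [L4 [L5 [L6 L7]]]]]].
  eapply forward; eassumption.
- case=> Hc Hd.
  eapply backward; eassumption.
Qed.
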